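(* Let $n\geq 2$ be an integer and let $CCC(n)$ be the crystal cubic carbon graph with $n$ layers. Then the minimum cardinality of a strong resolving set of $CCC(n)$ is $sdim(CCC(n))=32\times 7^{n-2}-1$.
   Context: All graphs are simple and connected; $d(u,v)$ is the shortest-path distance. For vertices $u,v$, $I_G[u,v]$ is the set of vertices lying on some shortest $u$–$v$ path. A vertex $w$ strongly resolves $u$ and $v$ if $v\in I_G[u,w]$ or $u\in I_G[v,w]$. A set $R$ of vertices is a strong resolving set of $G$ if every two distinct vertices of $G$ are strongly resolved by some vertex of $R$; $sdim(G)$ is the minimum size of a strong resolving set. The cube $C_4\Box P_2$ is the graph on $\{1,\dots,8\}$ with edges $12,23,34,14,56,67,78,58$ and $15,26,37,48$. The crystal cubic carbon $CCC(n)$ is constructed as follows. Its vertex set is partitioned into layers $L_1,\dots,L_n$. Layer $L_1$ is a copy of $C_4\Box P_2$ with vertices $1,\dots,8$. For $2\leq k\leq n$, layer $L_k$ consists of $8\times 7^{k-2}$ vertex-disjoint copies of $C_4\Box P_2$ (called cubes), each cube having a distinguished vertex (the vertex labelled $1$ in its copy) called its head vertex. Each vertex $r\in L_1$ is joined by an edge to the head vertex of exactly one cube of $L_2$ (distinct vertices of $L_1$ to distinct cubes). For $2\leq k<n$, each of the $7$ non-head vertices of each cube of $L_k$ is joined by an edge to the head vertex of exactly one cube of $L_{k+1}$, in such a way that every cube of $L_{k+1}$ has its head joined to exactly one such vertex. There are no other edges. Thus $CCC(n)$ has $8+64\sum_{k=2}^{n}7^{k-2}$ vertices. *)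

(* Defs.v *)
From mathcomp Require Import all_boot.
Set Implicit Arguments. Unset Strict Implicit. Unset Printing Implicit Defensive.

Section Graphs.
Variable T : finType.
Variable e : rel T.

Definition walkb (u v : T) (m : nat) : bool :=
  [exists p : m.-tuple T, path e u p && (last u p == v)].

(* shortest-path distance: least m with a u-v walk of length m (in a connected
   graph such an m exists and is < #|T|) *)
Definition dist (u v : T) : nat := find (walkb u v) (iota 0 #|T|).

Definition in_interval (u v w : T) : Prop :=
  exists p : seq T, [/\ path e u p, last u p = v, size p = dist u v & w \in u :: p].

Definition strongly_resolves (w u v : T) : Prop :=
  in_interval u w v \/ in_interval v w u.

Definition strong_resolving_set (R : {set T}) : Prop :=
  forall u v : T, u != v -> exists2 w, w \in R & strongly_resolves w u v.

Definition is_sdim (N : nat) : Prop :=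
  (exists R : {set T}, strong_resolving_set R /\ #|R| = N) /\
  (forall R : {set T}, strong_resolving_set R -> N <= #|R|).
End Graphs.

(* ---------- The cube C4 [] P2 on labels 0..7 (paper's 1..8, head = 0) ---------- *)
Definition cube_edges : seq (nat * nat) :=
  [:: (0,1); (1,2); (2,3); (0,3); (4,5); (5,6); (6,7); (4,7);
      (0,4); (1,5); (2,6); (3,7)].

Definition cube_adj (a b : 'I_8) : bool :=
  (((a : nat), (b : nat)) \in cube_edges) || (((b : nat), (a : nat)) \in cube_edges).

(* ---------- Crystal cubic carbon CCC(n) ----------
   A vertex of layer k (1 <= k <= n) is a sequence [x_1; ...; x_k] of cube labels:
   x_1 is a vertex of the layer-1 cube; the layer-2 cube attached to x_1 has
   vertices [x_1; y]; the layer-(j+1) cube attached to the non-head vertex s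
   (last label <> 0) of a layer-j cube has vertices rcons s y. Hence internal
   entries x_2..x_{k-1} are nonzero.  Encoded as (k-1, t) with t : n.-tuple 'I_8,
   the vertex sequence being take k t, padded by zeros. *)
Definition ccc_valid (n : nat) (x : 'I_n * n.-tuple 'I_8) : bool :=
  [forall i : 'I_n,
     ((x.1 < i) ==> (tnth x.2 i == ord0)) &&
     (((0 < i) && (i < x.1)) ==> (tnth x.2 i != ord0))].

Definition ccc_vertex (n : nat) := {x : 'I_n * n.-tuple 'I_8 | ccc_valid x}.

Definition vseq (n : nat) (x : ccc_vertex n) : seq 'I_8 :=
  take (val x).1.+1 (val x).2.

Definition ccc_rel (n : nat) : rel (ccc_vertex n) := fun x y =>
  let s := vseq x in let s' := vseq y in
  [&& size s == size s', belast ord0 s == belast ord0 s'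
    & cube_adj (last ord0 s) (last ord0 s')]
  (* edge between a vertex and the head of the cube attached to it *)
  || (s' == rcons s ord0) || (s == rcons s' ord0).

(* Main.v *)
Require Import Defs.
From mathcomp Require Import all_boot zify.
Set Implicit Arguments. Unset Strict Implicit. Unset Printing Implicit Defensive.

Section Generic.
Variable T : finType.
Variable e : rel T.
Variable D : T -> T -> nat.
Hypothesis D0 : forall x, D x x = 0.
Hypothesis DLip : forall x y z, e y z -> D x z <= (D x y).+1.
Hypothesis Ddesc : forall x y, x != y -> exists z, e y z /\ (D x z).+1 = D x y.

Lemma walk_lb x p y : path e y p -> D x (last y p) <= D x y + size p.
Proof.
elim: p y => [|z p IH] y /=; first by rewrite addn0.
case/andP=> eyz pz; apply: leq_trans (IH _ pz) _.
by rewrite addnS -addSn leq_add2r DLip.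
Qed.

Lemma walk_ex' x y : exists p, [/\ path e y p, last y p = x & size p = D x y].
Proof.
move Hk: (D x y) => k; elim: k y Hk => [|k IH] y Hk.
  case: (eqVneq x y) => [->|nxy]; first by exists [::].
  by case: (Ddesc nxy) => z [_]; rewrite Hk.
case: (eqVneq x y) => [exy|nxy]; first by rewrite exy D0 in Hk.
case: (Ddesc nxy) => z [eyz]; rewrite Hk => [[Hz]].
case: (IH z Hz) => p [pz lz sz]; exists (z :: p); split => //=.
  by rewrite eyz.
by rewrite sz.
Qed.

Lemma Dsym x y : D x y = D y x.
Proof.
suff H : forall x y, D y x <= D x y by apply/eqP; rewrite eqn_leq !H.
move=> a b; case: (walk_ex' a b) => p [pb lb sb].
by have := walk_lb b pb; rewrite lb D0 sb.
Qed.

Lemma walk_ex x y : exists p, [/\ path e x p, last x p = y & size p = D x y].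
Proof. by case: (walk_ex' y x) => p [? ? ?]; exists p; rewrite Dsym. Qed.

Lemma D_eq0 x y : D x y = 0 -> x = y.
Proof. by case: (eqVneq x y) => // /Ddesc [z [_ <-]]. Qed.

Lemma Dtri x y z : D x z <= D x y + D y z.
Proof.
case: (walk_ex x y) => p [pp lp sp]; case: (walk_ex y z) => q [pq lq sq].
have := walk_lb x (p := p ++ q) (y := x).
rewrite cat_path pp lp pq last_cat lp lq D0 size_cat sp sq => /(_ isT) //.
Qed.

Lemma D_lt_card x y : D x y < #|T|.
Proof.
case: (walk_ex x y) => p [pp lp sp].
rewrite -lp; case: (shortenP pp) => p' pp' up' _.
have := walk_lb x pp'; rewrite D0 add0n => H.
apply: leq_trans (_ : size (x :: p') <= _); first by rewrite /= ltnS.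
by rewrite -(card_uniqP up') max_card.
Qed.

Lemma find_iota (P : pred nat) k N s : s <= k < s + N -> P k ->
  (forall m, s <= m < k -> ~~ P m) -> find P (iota s N) = k - s.
Proof.
elim: N s => [|N IH] s; first by rewrite addn0 => /andP [a b]; move: (leq_ltn_trans a b); rewrite ltnn.
move=> /andP [sk kN] Pk Hm /=.
case: (eqVneq k s) => [eks|nks]; first by rewrite -eks Pk subnn.
have sk' : s < k by rewrite ltn_neqAle eq_sym nks sk.
rewrite (negbTE (Hm s _)); last by rewrite leqnn sk'.
rewrite IH //; first by rewrite subnS prednK // subn_gt0.
  by rewrite sk' addSnnS.
by move=> m /andP [sm mk]; apply: Hm; rewrite mk andbT ltnW.
Qed.

Lemma distE x y : dist e x y = D x y.
Proof.
rewrite /dist (@find_iota _ (D x y)) ?subn0 //.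
- by rewrite leq0n add0n D_lt_card.
- case: (walk_ex x y) => p [pp lp sp].
  apply/existsP; exists (Tuple (introT eqP sp)) => /=.
  by rewrite pp lp eqxx.
- move=> m /andP [_ mk]; apply/existsP => [[t /andP [pt /eqP lt]]].
  have := walk_lb x pt; rewrite lt D0 size_tuple add0n => H.
  by move: (leq_ltn_trans H mk); rewrite ltnn.
Qed.

Lemma intervalE u v w : in_interval e u v w <-> D u w + D w v = D u v.
Proof.
split.
- case=> p [pp lp sp win]; move: pp lp sp; case/splitPl: win => p1 p2 lp1 pp lp.
  rewrite distE => sp.
  move: pp; rewrite cat_path => /andP [pp1 pp2].
  have H1 := walk_lb u pp1; have H2 := walk_lb w pp2.
  rewrite lp1 D0 add0n in H1; rewrite last_cat in lp.
  rewrite lp lp1 D0 add0n in H2.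
  apply/eqP; rewrite eqn_leq Dtri andbT -sp size_cat.
  by apply: leq_add.
- move=> H.
  case: (walk_ex u w) => p [pp lp sp]; case: (walk_ex w v) => q [pq lq sq].
  exists (p ++ q); split.
  + by rewrite cat_path pp lp pq.
  + by rewrite last_cat lp lq.
  + by rewrite distE size_cat sp sq.
  + rewrite -cat_cons mem_cat; apply/orP; left; rewrite -lp; exact: mem_last.
Qed.

Definition maxd x y := forall z, e y z -> D x z <= D x y.

Lemma only_res x y w : maxd x y -> maxd y x -> strongly_resolves e w x y ->
  w = x \/ w = y.
Proof.
have key : forall a b, maxd a b -> in_interval e a w b -> w = b.
  move=> a b mab /intervalE H.
  case: (eqVneq w b) => // /Ddesc [z [ebz Hz]].
  have := mab z ebz; have := Dtri a z w.
  rewrite -H (Dsym z w) (Dsym b w) -Hz => H1 H2.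
  have := leq_trans H1 (leq_add H2 (leqnn _)).
  by rewrite addnS ltnn.
move=> mxy myx [H|H]; [right; exact: key H | left; exact: key H].
Qed.

Lemma cover_res (R : {set T}) :
  (forall a b, a != b -> maxd a b -> maxd b a -> (a \in R) || (b \in R)) ->
  strong_resolving_set e R.
Proof.
move=> Hc u v nuv.
pose P := fun p : T * T => D p.1 p.2 == D p.1 u + D u v + D v p.2.
have P0 : P (u, v) by rewrite /P /= !D0 addn0.
case: (arg_maxnP (fun p => D p.1 p.2) P0) => [[a b]] /= /eqP Pab Hmax.
have Duv : 0 < D u v by rewrite lt0n; apply/negP => /eqP /D_eq0 /eqP; rewrite (negbTE nuv).
have nab : a != b.
  by apply/negP => /eqP eab; move: Pab; rewrite eab D0 => /esym/eqP; rewrite addn_eq0 addn_eq0 (negbTE (lt0n_neq0 Duv)) andbF.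
have mba : maxd b a.
  move=> z eaz; rewrite leqNgt; apply/negP => Hz.
  have Hz1 : D b z = (D b a).+1 by apply/eqP; rewrite eqn_leq DLip.
  have Pz : P (z, b).
    rewrite /P /=; apply/eqP/eqP; rewrite eqn_leq.
    have T1 : D z b <= D z u + D u v + D v b by rewrite -addnA; apply: leq_trans (Dtri z u b) _; rewrite leq_add2l Dtri.
    rewrite T1 /=.
    have T2 : D z u <= (D a u).+1 by apply: leq_trans (Dtri z a u) _; rewrite (Dsym z a) -add1n leq_add2r -(D0 a) DLip.
    rewrite (Dsym z b) Hz1 (Dsym b a) Pab -!addSn !leq_add2r.
    exact: T2.
  have := Hmax _ Pz; rewrite /= (Dsym z b) Hz1 (Dsym b a).
  by rewrite ltnn.
have mab : maxd a b.
  move=> z ebz; rewrite leqNgt; apply/negP => Hz.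
  have Hz1 : D a z = (D a b).+1 by apply/eqP; rewrite eqn_leq DLip.
  have Pz : P (a, z).
    rewrite /P /=; apply/eqP; apply/eqP; rewrite eqn_leq.
    have T1 : D a z <= D a u + D u v + D v z by rewrite -!addnA; apply: leq_trans (Dtri a u z) _; rewrite leq_add2l; apply: leq_trans (Dtri u v z) _; rewrite leqnn.
    rewrite T1 /= Hz1 Pab -addnS leq_add2l.
    exact: DLip ebz.
  have := Hmax _ Pz; rewrite /= Hz1.
  by rewrite ltnn.
case/orP: (Hc a b nab mab mba) => [aR|bR].
- exists a => //; right; apply/intervalE.
  have H1 : D a v <= D a u + D u v := Dtri a u v.
  have H2 : D a b <= D a v + D v b := Dtri a v b.
  rewrite Pab leq_add2r in H2.
  rewrite (Dsym v u) (Dsym u a) (Dsym v a) addnC; apply/eqP; rewrite eqn_leq H1 andbT.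
  exact: H2.
- exists b => //; left; apply/intervalE.
  have H1 : D u b <= D u v + D v b := Dtri u v b.
  have H2 : D a b <= D a u + D u b := Dtri a u b.
  rewrite Pab -addnA leq_add2l in H2.
  by apply/eqP; rewrite eqn_leq H1 H2.
Qed.

End Generic.


Definition cd (a b : 'I_8) : nat :=
  let d := (a %% 4 + 4 - b %% 4) %% 4 in minn d (4 - d) + (a %/ 4 != b %/ 4).
Definition o8 : seq 'I_8 := [:: @Ordinal 8 0 isT; @Ordinal 8 1 isT; @Ordinal 8 2 isT; @Ordinal 8 3 isT; @Ordinal 8 4 isT; @Ordinal 8 5 isT; @Ordinal 8 6 isT; @Ordinal 8 7 isT].
Lemma mem_o8 a : a \in o8.
Proof. by case: a; do 8?case => //. Qed.

Lemma all8 (P : pred 'I_8) : all P o8 -> forall a, P a.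
Proof. by move/allP => H a; apply: H; exact: mem_o8. Qed.
Lemma has8 (P : pred 'I_8) : has P o8 -> exists a, P a.
Proof. by case/hasP => a _ H; exists a. Qed.
Lemma all8_2 (P : 'I_8 -> 'I_8 -> bool) : all (fun a => all (P a) o8) o8 -> forall a b, P a b.
Proof. by move=> H a; apply: all8; move: a; apply: all8. Qed.
Lemma all8_3 (P : 'I_8 -> 'I_8 -> 'I_8 -> bool) :
  all (fun a => all (fun b => all (P a b) o8) o8) o8 -> forall a b c, P a b c.
Proof. by move=> H a b; apply: all8; move: a b; apply: all8_2. Qed.

Definition c0 : 'I_8 := ord0.
Definition c6 : 'I_8 := @Ordinal 8 6 isT.

Lemma cd_refl a : cd a a = 0.
Proof. apply/eqP; move: a; apply: (all8 (P := fun a => cd a a == 0)); by vm_compute. Qed.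
Lemma cd_sym a b : cd a b = cd b a.
Proof. apply/eqP; move: a b; apply: (all8_2 (P := fun a b => cd a b == cd b a)); by vm_compute. Qed.
Lemma cd_le3 a b : cd a b <= 3.
Proof. move: a b; apply: (all8_2 (P := fun a b => cd a b <= 3)); by vm_compute. Qed.
Lemma adj_sym a b : cube_adj a b = cube_adj b a.
Proof. apply/eqP; move: a b; apply: (all8_2 (P := fun a b => cube_adj a b == cube_adj b a)); by vm_compute. Qed.
Lemma cd_lip c b b' : cube_adj b b' -> cd c b' <= (cd c b).+1.
Proof. apply/implyP; move: c b b'; apply: (all8_3 (P := fun c b b' => cube_adj b b' ==> (cd c b' <= (cd c b).+1))); by vm_compute. Qed.
Lemma cd_desc c b : b != c -> exists b', cube_adj b b' /\ (cd c b').+1 = cd c b.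
Proof.
have H : forall c b, (b != c) ==> has (fun b' => cube_adj b b' && ((cd c b').+1 == cd c b)) o8.
  apply: (all8_2 (P := fun c b => (b != c) ==> has (fun b' => cube_adj b b' && ((cd c b').+1 == cd c b)) o8)); by vm_compute.
move=> nbc; case/has8: (implyP (H c b) nbc) => b' /andP [h1 /eqP h2]; by exists b'.
Qed.
Lemma cd_max c b : (forall b', cube_adj b b' -> cd c b' <= cd c b) -> cd c b = 3.
Proof.
have H : forall c b, all (fun b' => cube_adj b b' ==> (cd c b' <= cd c b)) o8 ==> (cd c b == 3).
  apply: (all8_2 (P := fun c b => all (fun b' => cube_adj b b' ==> (cd c b' <= cd c b)) o8 ==> (cd c b == 3))); by vm_compute.
move=> Hb; apply/eqP; apply: (implyP (H c b)); apply/allP => b' _; apply/implyP; exact: Hb.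
Qed.
Lemma cd_pair a b : a != c0 -> b != c0 -> cd a b = 3 -> (val a \in [:: 1; 2; 3]) || (val b \in [:: 1; 2; 3]).
Proof.
move=> h1 h2 /eqP h3; move: a b h1 h2 h3.
have H := all8_2 (P := fun a b => (a != c0) ==> (b != c0) ==> (cd a b == 3) ==> ((val a \in [:: 1; 2; 3]) || (val b \in [:: 1; 2; 3]))).
move=> a b h1 h2 h3; move: (H (ltac:(by vm_compute)) a b); by rewrite h1 h2 h3.
Qed.
Lemma cd0_3 b : cd c0 b = 3 -> b = c6.
Proof.
move=> h; apply/eqP; move: b h; have H := all8 (P := fun b => (cd c0 b == 3) ==> (b == c6)).
move=> b /eqP h; exact: (implyP (H (ltac:(by vm_compute)) b) h).
Qed.
Lemma cd06 : cd c0 c6 = 3. Proof. by []. Qed.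
Lemma cd0_0 : cd c0 c0 = 0. Proof. by []. Qed.
Lemma partner a : val a \in [:: 1; 2; 3] -> exists b, [/\ cd a b = 3, b != c0, a != b & val b \in [:: 4; 5; 7]].
Proof.
move: a; have H := all8 (P := fun a => (val a \in [:: 1; 2; 3]) ==> has (fun b => [&& cd a b == 3, b != c0, a != b & val b \in [:: 4; 5; 7]]) o8).
move=> a ha; case/has8: (implyP (H (ltac:(by vm_compute)) a) ha) => b /and4P [/eqP h1 h2 h3 h4]; by exists b.
Qed.


Definition up (l : seq 'I_8) : nat := sumn (map (fun y => (cd y c0).+1) l).

Fixpoint Drel (s t : seq 'I_8) : nat :=
  match s, t with
  | [::], _ => up t
  | _ :: _, [::] => up s
  | y :: l, z :: l' => if y == z then Drel l l' else up l + cd y z + up l'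
  end.

Lemma up_cat a b : up (a ++ b) = up a + up b.
Proof. by rewrite /up map_cat sumn_cat. Qed.
Lemma up_cons y l : up (y :: l) = (cd y c0).+1 + up l.
Proof. by []. Qed.
Lemma up_nil : up [::] = 0. Proof. by []. Qed.

Lemma Drel_nil_r s : Drel s [::] = up s.
Proof. by case: s. Qed.

Lemma Drel_cat P s t : Drel (P ++ s) (P ++ t) = Drel s t.
Proof. by elim: P => //= y P IH; rewrite eqxx. Qed.

Lemma Drel_refl s : Drel s s = 0.
Proof. by rewrite -(cats0 s) Drel_cat. Qed.

Lemma caseA P c l b : Drel (P ++ c :: l) (rcons P b) = up l + cd c b.
Proof.
rewrite -cats1 Drel_cat /=; case: eqP => [->|_]; last by rewrite addn0.
by rewrite Drel_nil_r cd_refl addn0.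
Qed.

Lemma caseA2 P c l b : b != c -> Drel (P ++ c :: l) (rcons (rcons P b) c0) = (up l + cd c b).+1.
Proof.
move=> nbc; rewrite -!cats1 -catA Drel_cat /= eq_sym (negbTE nbc).
by rewrite /up /= cd0_0 addn0 addn1.
Qed.

Lemma Drel_l0 l : l != [::] -> (Drel l [:: c0]).+1 = up l.
Proof.
case: l => // y l _ /=; case: eqP => [->|ny].
  by rewrite Drel_nil_r up_cons cd0_0.
by rewrite up_nil addn0 up_cons addnC addSn.
Qed.

Lemma caseA3 P c l : Drel (P ++ c :: l) (rcons (rcons P c) c0) = Drel l [:: c0].
Proof. by rewrite -!cats1 -catA Drel_cat /= eqxx. Qed.

Lemma caseApar P c l : Drel (P ++ c :: l) P = up l + (cd c c0).+1.
Proof. by rewrite -{2}(cats0 P) Drel_cat Drel_nil_r up_cons addnC. Qed.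

Lemma caseB P s v : (forall c l, s != P ++ c :: l) -> Drel s (P ++ v) = Drel s P + up v.
Proof.
elim: P s => [|z P IH] [|y l] /= H.
- by rewrite up_nil.
- by have := H y l; rewrite eqxx.
- by rewrite -cat_cons up_cat.
- case: eqP => [eyz|nyz].
    rewrite IH // => c l'; apply/negP => /eqP E; have := H c l'; by rewrite E eyz eqxx.
  by rewrite up_cat !addnA.
Qed.

Variant cube_spec (s P : seq 'I_8) : Type :=
  | CA c l of s = P ++ c :: l
  | CB of (forall c l, s != P ++ c :: l).

Lemma cubeP s P : cube_spec s P.
Proof.
case H: ((size P < size s) && (take (size P) s == P)).
  case/andP: H => H1 /eqP H2.
  apply: (@CA _ _ (nth c0 s (size P)) (drop (size P).+1 s)).
  by rewrite -{1}(cat_take_drop (size P) s) H2 (drop_nth c0 H1).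
apply: CB => c l; apply/negP => /eqP E; move: H; rewrite E size_cat /= take_size_cat //.
by rewrite addnS ltnS leq_addr eqxx.
Qed.


Section Vert.
Variable m : nat.
Local Notation n := m.+2.
Local Notation V := (ccc_vertex n).

Definition inner (s : seq 'I_8) := behead (take (size s).-1 s).
Definition okb (s : seq 'I_8) := (0 < size s <= n) && all (fun y => y != c0) (inner s).

Lemma size_inner s : size (inner s) = (size s).-2.
Proof. by rewrite size_behead size_takel // leq_pred. Qed.

Lemma nth_inner s i : i.+1 < (size s).-1 -> nth c0 (inner s) i = nth c0 s i.+1.
Proof. by move=> h; rewrite nth_behead nth_take. Qed.

Lemma okbP s : reflect ((0 < size s <= n) /\ forall i, 0 < i < (size s).-1 -> nth c0 s i != c0) (okb s).
Proof.
apply: (iffP andP) => [[H1 /(all_nthP c0) H2]|[H1 H2]]; split => //.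
  move=> [//|i] /andP [_ Hi]; rewrite -nth_inner //; apply: H2.
  rewrite size_inner; lia.
apply/(all_nthP c0) => i; rewrite size_inner => Hi.
rewrite nth_inner; last lia.
apply: H2; lia.
Qed.
End Vert.

Section Vert2.
Variable m : nat.
Local Notation n := m.+2.
Local Notation V := (ccc_vertex n).

Lemma vseq_size (x : V) : size (vseq x) = (val x).1.+1.
Proof. by rewrite /vseq size_takel // size_tuple ltn_ord. Qed.

Lemma validP (x : 'I_n * n.-tuple 'I_8) : ccc_valid x ->
  forall i : 'I_n, (x.1 < i -> tnth x.2 i = ord0) /\ (0 < i < x.1 -> tnth x.2 i != ord0).
Proof.
move/forallP => H i; case/andP: (H i) => /implyP h1 /implyP h2; split => // h.
by apply/eqP; apply: h1.
Qed.

Lemma nth_vseq (x : V) i : i <= (val x).1 -> nth c0 (vseq x) i = nth c0 (val x).2 i.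
Proof. by move=> h; rewrite /vseq nth_take. Qed.

Lemma vs_ok (x : V) : okb m (vseq x).
Proof.
apply/okbP; rewrite vseq_size; split; first by rewrite ltn_ord.
case: x => [[k t] vx]; rewrite /= => i hi; have := ltn_ord k => hk.
have hin : i < n by lia.
rewrite (@nth_vseq (exist _ (k, t) vx)) /=; last lia.
have := (validP vx (Ordinal hin)).2; rewrite (tnth_nth c0) /=; apply; lia.
Qed.

Lemma vs_inj : injective (@vseq n).
Proof.
move=> x y E; apply: val_inj.
have Hk : (val x).1 = (val y).1 by apply: val_inj; apply: succn_inj; rewrite -!vseq_size E.
case: x y E Hk => [[k t] vx] [[k' t'] vy] /= E Hk; subst k'; congr pair.
apply: eq_from_tnth => i; rewrite !(tnth_nth c0).
case: (leqP i k) => hi.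
  by rewrite -!(@nth_vseq (exist _ (k, _) _)) //= ; rewrite /vseq /= in E *; rewrite E.
have := (validP vx i).1 hi; have := (validP vy i).1 hi; rewrite /= !(tnth_nth c0) => -> -> //.
Qed.

Definition enc (s : seq 'I_8) : 'I_n * n.-tuple 'I_8 :=
  (inord (size s).-1, [tuple nth c0 s i | i < n]).

Lemma enc_valid s : okb m s -> ccc_valid (enc s).
Proof.
case/okbP => [/andP [h0 hn] h]; apply/forallP => i /=; rewrite inordK; last lia.
rewrite tnth_mktuple; apply/andP; split; apply/implyP => hi.
  by rewrite nth_default //; lia.
exact: h.
Qed.

Definition mkV (x0 : V) (s : seq 'I_8) : V := insubd x0 (enc s).

Lemma mkVE x0 s : okb m s -> vseq (mkV x0 s) = s.
Proof.
move=> hs; rewrite /vseq /mkV val_insubd (enc_valid hs).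
change (take (inord (size s).-1 : 'I_n).+1 [tuple nth c0 s i | i < n] = s).
case/okbP: hs => [/andP [h0 hn] _]; rewrite inordK; last lia.
rewrite prednK //.
apply: (@eq_from_nth _ c0); first by rewrite size_takel // size_tuple.
move=> i; rewrite size_takel ?size_tuple // => hi.
rewrite nth_take // .
have hin : i < n by lia.
by rewrite -(tnth_nth c0 _ (Ordinal hin)) tnth_mktuple.
Qed.
End Vert2.


Section Graph.
Variable m : nat.
Local Notation n := m.+2.
Local Notation V := (ccc_vertex n).
Local Notation okb := (okb m).

Lemma inner_rcons P b : inner (rcons P b) = behead P.
Proof. by rewrite /inner size_rcons /= -cats1 take_size_cat. Qed.

Lemma okb_rcons P b : okb (rcons P b) = (size P < n) && all (fun y => y != c0) (behead P).
Proof. by rewrite /okb inner_rcons size_rcons. Qed.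

Lemma vseq_ne (x : V) : vseq x <> [::].
Proof. by move=> E; have := vseq_size x; rewrite E. Qed.

Lemma behead_rcons (P : seq 'I_8) b : P != [::] -> behead (rcons P b) = rcons (behead P) b.
Proof. by case: P. Qed.

Lemma ok_lab P b b' : okb (rcons P b) -> okb (rcons P b').
Proof. by rewrite !okb_rcons. Qed.

Lemma ok_child P b : okb (rcons P b) -> size P < m.+1 -> (P == [::]) || (b != c0) ->
  okb (rcons (rcons P b) c0).
Proof.
rewrite !okb_rcons size_rcons => /andP [_ h1] h2 h3; rewrite ltnS h2 /=.
case: P h1 h3 {h2} => //= p P h1 h3.
by rewrite all_rcons h1 andbT.
Qed.

Lemma ok_par P b : okb (rcons (rcons P b) c0) -> okb (rcons P b).
Proof.
rewrite !okb_rcons size_rcons => /andP [h1 h2]; apply/andP; split; first lia.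
by case: P h1 h2 => //= p P _; rewrite all_rcons => /andP [].
Qed.

Lemma ok_down P c l : l != [::] -> okb (P ++ c :: l) -> okb (rcons (rcons P c) c0).
Proof.
case/lastP: l => // l x _.
rewrite -rcons_cons -rcons_cat !okb_rcons size_rcons size_cat /= => /andP [h1 h2].
apply/andP; split; first lia.
move: h2; rewrite -cat_rcons.
by case: P {h1} => [|p P] //=; rewrite all_cat => /andP [].
Qed.

Lemma rcons_eq_ord0 (s : seq 'I_8) : rcons s ord0 = rcons s c0. Proof. by []. Qed.

Lemma rel_cases (y z : V) : ccc_rel y z ->
  (exists P b b', [/\ vseq y = rcons P b, vseq z = rcons P b' & cube_adj b b'])
  \/ vseq z = rcons (vseq y) c0 \/ vseq y = rcons (vseq z) c0.
Proof.
case/orP => [/orP [|/eqP ->]|/eqP ->]; [|by right; left|by right; right].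
case/and3P => _; case/lastP E1: (vseq y) => [|P b]; first by case: (vseq_ne E1).
case/lastP E2: (vseq z) => [|P' b']; first by case: (vseq_ne E2).
rewrite !belast_rcons !last_rcons => /eqP [<-] hadj.
by left; exists P, b, b'.
Qed.

Lemma E1 (y z : V) P b b' : vseq y = rcons P b -> vseq z = rcons P b' -> cube_adj b b' -> ccc_rel y z.
Proof.
move=> h1 h2 h3; apply/orP; left; apply/orP; left.
by rewrite /ccc_rel h1 h2 !size_rcons !belast_rcons !last_rcons !eqxx h3.
Qed.

Lemma E2 (y z : V) : vseq z = rcons (vseq y) c0 -> ccc_rel y z.
Proof. by move=> h; apply/orP; left; apply/orP; right; rewrite h. Qed.

Lemma E3 (y z : V) : vseq y = rcons (vseq z) c0 -> ccc_rel y z.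
Proof. by move=> h; apply/orP; right; rewrite h. Qed.

Definition DV (x y : V) := Drel (vseq x) (vseq y).

Lemma DV0 x : DV x x = 0.
Proof. exact: Drel_refl. Qed.

Lemma par_child s P b :
  Drel s (rcons (rcons P b) c0) <= (Drel s (rcons P b)).+1 /\
  Drel s (rcons P b) <= (Drel s (rcons (rcons P b) c0)).+1.
Proof.
case: (cubeP s P) => [c l ->|hB].
  case: (eqVneq b c) => [->|nbc].
    rewrite caseA3 caseA cd_refl addn0.
    case: (eqVneq l [::]) => [->|lne] //.
    by rewrite -(Drel_l0 lne); split; lia.
  by rewrite caseA2 // caseA; split; lia.
rewrite -!cats1 -catA !caseB //= /up /= cd0_0; split; lia.
Qed.

Lemma DLip x y z : ccc_rel y z -> DV x z <= (DV x y).+1.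
Proof.
rewrite /DV; case/rel_cases => [[P [b [b' [-> -> hadj]]]]|[->|->]].
- case: (cubeP (vseq x) P) => [c l ->|hB].
    by rewrite !caseA -addnS leq_add2l cd_lip.
  rewrite -!cats1 !caseB // /up /= !addn0 -addnS leq_add2l (cd_sym b') (cd_sym b); exact: cd_lip.
- case/lastP E: (vseq y) => [|P b]; first by case: (vseq_ne E).
  exact: (par_child _ P b).1.
- case/lastP E: (vseq z) => [|P b]; first by case: (vseq_ne E).
  exact: (par_child _ P b).2.
Qed.

Lemma Ddesc (x y : V) : x != y -> exists z, ccc_rel y z /\ (DV x z).+1 = DV x y.
Proof.
move=> nxy; have ne : vseq x != vseq y by apply: contra nxy => /eqP /vs_inj ->.
have oky := vs_ok y; have okx := vs_ok x.
rewrite /DV; case/lastP Et: (vseq y) oky ne => [|P b]; first by case: (vseq_ne Et).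
move=> oky ne.
case: (cubeP (vseq x) P) => [c l Es | hB].
- rewrite Es in ne okx *; case: (eqVneq b c) => [ebc|nbc].
  + subst b; have lne : l != [::] by apply: contra ne => /eqP ->; rewrite cats1.
    have okz := ok_down lne okx.
    exists (mkV y (rcons (rcons P c) c0)); rewrite mkVE //; split.
      by apply: E2; rewrite mkVE // Et.
    by rewrite caseA3 caseA cd_refl addn0 Drel_l0.
  + case: (cd_desc nbc) => b' [hadj hb'].
    have okz : okb (rcons P b') by apply: ok_lab oky.
    exists (mkV y (rcons P b')); rewrite mkVE //; split.
      by apply: (E1 (P := P) (b := b) (b' := b')) => //; rewrite mkVE.
    by rewrite !caseA -addnS hb'.
- case: (eqVneq b c0) => [eb0|nb0].
  + subst b.
    have Pne : P != [::].
      apply/negP => /eqP EP; subst P; case Ex: (vseq x) => [|c l]; first by case: (vseq_ne Ex).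
      by have := hB c l; rewrite Ex eqxx.
    have okz : okb P.
      by case/lastP: P Pne oky {hB Et ne} => // P b'' _; apply: ok_par.
    exists (mkV y P); rewrite mkVE //; split.
      by apply: E3; rewrite mkVE.
    by rewrite -cats1 caseB // /up /= cd0_0 addn1.
  + case: (cd_desc nb0) => b' [hadj hb'].
    have okz : okb (rcons P b') by apply: ok_lab oky.
    exists (mkV y (rcons P b')); rewrite mkVE //; split.
      by apply: (E1 (P := P) (b := b) (b' := b')) => //; rewrite mkVE.
    rewrite -!cats1 !caseB // /up /= !addn0 (cd_sym b') (cd_sym b) -hb'; by rewrite !addnS.
Qed.
End Graph.


Section Max.
Variable m : nat.
Local Notation n := m.+2.
Local Notation V := (ccc_vertex n).
Local Notation okb := (okb m).
Local Notation maxV := (maxd (@ccc_rel n) (@DV m)).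

Lemma rcons_eq2 (P Q : seq 'I_8) a b : rcons P a = rcons Q b -> P = Q /\ a = b.
Proof. by move/eqP; rewrite eqseq_rcons => /andP [/eqP -> /eqP ->]. Qed.

Lemma cd_neq c b : cd c b = 3 -> b != c.
Proof. by move=> h; apply/eqP => E; rewrite E cd_refl in h. Qed.

Lemma max_nec (x y : V) P b : maxV x y -> vseq y = rcons P b ->
  [/\ size P = m.+1, b != c0,
      (forall c l, vseq x = P ++ c :: l -> cd c b = 3) &
      ((forall c l, vseq x != P ++ c :: l) -> cd c0 b = 3)].
Proof.
move=> Hm Ey; have oky := vs_ok y; rewrite Ey in oky.
have Hadj : forall b', cube_adj b b' -> Drel (vseq x) (rcons P b') <= Drel (vseq x) (rcons P b).
  move=> b' hadj; have okz : okb (rcons P b') by apply: ok_lab oky.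
  have := Hm (mkV y (rcons P b')); rewrite /DV mkVE // Ey; apply.
  by apply: (E1 (P := P) (b := b) (b' := b')) => //; rewrite mkVE.
have H3 : (forall c l, vseq x = P ++ c :: l -> cd c b = 3) /\
          ((forall c l, vseq x != P ++ c :: l) -> cd c0 b = 3).
  case: (cubeP (vseq x) P) => [c l Es|hB].
    split; last by move=> /(_ c l); rewrite Es eqxx.
    move=> c' l'; rewrite Es => /(congr1 (drop (size P))); rewrite !drop_size_cat // => -[<- _].
    apply: cd_max => b' hadj; have := Hadj b' hadj; rewrite Es !caseA.
    by rewrite leq_add2l.
  split; first by move=> c l E; have := hB c l; rewrite E eqxx.
  move=> _; apply: cd_max => b' hadj; have := Hadj b' hadj.
  by rewrite -!cats1 !caseB // /up /= !addn0 leq_add2l ltnS (cd_sym b') (cd_sym b).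
case: H3 => HA HB.
have nb0 : b != c0.
  apply/negP => /eqP eb; subst b.
  case: (cubeP (vseq x) P) => [c l Es|hB]; last by have := HB hB; rewrite cd0_0.
  have h3 := HA c l Es; have nc : c0 != c by apply: cd_neq.
  case: (eqVneq P [::]) => [EP|Pne].
    subst P; have okz : okb (rcons (rcons [::] c0) c0) by apply: ok_child.
    have Hr : ccc_rel y (mkV y (rcons (rcons [::] c0) c0)) by apply: E2; rewrite mkVE // Ey.
    have := Hm _ Hr; rewrite /DV mkVE // Ey Es.
    by rewrite caseA2 // caseA ltnn.
  have okz : okb P by case/lastP: P Pne oky {HA HB Es Ey Hadj} => // P b'' _; apply: ok_par.
  have Hr : ccc_rel y (mkV y P) by apply: E3; rewrite mkVE // Ey.
  have := Hm _ Hr; rewrite /DV mkVE // Ey Es caseApar caseA h3.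
  by rewrite addnS ltnn.
have hsz : size P = m.+1.
  move: (oky); rewrite okb_rcons => /andP [hP _].
  apply/eqP; rewrite eqn_leq -ltnS hP /= leqNgt; apply/negP => hlt.
  have okz : okb (rcons (rcons P b) c0) by apply: ok_child => //; rewrite nb0 orbT.
  have Hr : ccc_rel y (mkV y (rcons (rcons P b) c0)) by apply: E2; rewrite mkVE // Ey.
  have := Hm _ Hr; rewrite /DV mkVE // Ey.
  case: (cubeP (vseq x) P) => [c l Es|hB].
    by rewrite Es caseA2 ?caseA ?ltnn //; apply: cd_neq; apply: HA Es.
  rewrite -!cats1 -catA !caseB // /up /= cd0_0; lia.
by split.
Qed.

Lemma max_suf (x y : V) P b : vseq y = rcons P b -> size P = m.+1 -> b != c0 ->
  (forall c l, vseq x = P ++ c :: l -> cd c b = 3) ->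
  ((forall c l, vseq x != P ++ c :: l) -> cd c0 b = 3) -> maxV x y.
Proof.
move=> Ey hsz nb0 HA HB z; rewrite /DV; case/rel_cases => [[P' [b1 [b' [E1' Ez hadj]]]]|[Ez|Ez]].
- rewrite Ey in E1'; case: (rcons_eq2 E1') => ? ?; subst P' b1.
  rewrite Ez Ey; case: (cubeP (vseq x) P) => [c l Es|hB].
    by rewrite Es !caseA leq_add2l (HA c l Es) cd_le3.
  by rewrite -!cats1 !caseB // /up /= !addn0 leq_add2l ltnS (cd_sym b') (cd_sym b) (HB hB) cd_le3.
- have := vs_ok z; rewrite Ez Ey okb_rcons size_rcons hsz; lia.
- by move: Ey; rewrite Ez => /rcons_eq2 [_ eb]; rewrite -eb eqxx in nb0.
Qed.

Lemma cat1_eq (P Q : seq 'I_8) a c l : size P = size Q -> rcons Q a = P ++ c :: l -> Q = P /\ a = c /\ l = [::].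
Proof.
move=> hs E; have := congr1 size E; rewrite size_rcons size_cat /= hs => hl.
have l0 : l = [::] by case: l E hl => // ? ? _ /=; lia.
subst l; rewrite cats1 in E; case: (rcons_eq2 E) => -> ->; by [].
Qed.

Lemma MM1 (x y : V) P a b : vseq x = rcons P a -> vseq y = rcons P b -> size P = m.+1 ->
  a != c0 -> b != c0 -> cd a b = 3 -> maxV x y /\ maxV y x.
Proof.
move=> Ex Ey hs na nb hab; split.
- apply: (max_suf Ey) => //.
    by move=> c l; rewrite Ex => /(cat1_eq (erefl _)) [_ [<- _]].
  by move=> /(_ a [::]); rewrite Ex cats1 eqxx.
- apply: (max_suf Ex) => //.
    by move=> c l; rewrite Ey => /(cat1_eq (erefl _)) [_ [<- _]]; rewrite cd_sym.
  by move=> /(_ b [::]); rewrite Ey cats1 eqxx.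
Qed.

Lemma MM2 (x y : V) P Q : vseq x = rcons P c6 -> vseq y = rcons Q c6 -> size P = m.+1 -> size Q = m.+1 ->
  P != Q -> maxV x y /\ maxV y x.
Proof.
move=> Ex Ey hP hQ nPQ; split.
- apply: (max_suf Ey) => //.
    move=> c l; rewrite Ex => /(cat1_eq (etrans hQ (esym hP))) [eq _].
    by rewrite eq eqxx in nPQ.
- apply: (max_suf Ex) => //.
    move=> c l; rewrite Ey => /(cat1_eq (etrans hP (esym hQ))) [eq _].
    by rewrite eq eqxx in nPQ.
Qed.
End Max.


Definition Fam (m : nat) (b : 'I_8) : 'I_m.+2 -> pred 'I_8 :=
  fun i => if nat_of_ord i == 0 then predT else if nat_of_ord i == m.+1 then pred1 b else predC1 ord0.

Lemma card_Fam m b : #|family (@Fam m b)| = 8 * 7 ^ m.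
Proof.
rewrite card_family foldrE big_map big_enum /=.
rewrite big_ord_recl big_ord_recr /=.
rewrite /Fam /= eqxx.
have -> : #|predT : pred 'I_8| = 8 by rewrite cardT size_enum_ord.
rewrite card1 muln1; congr (_ * _).
rewrite (eq_bigr (fun _ => 7)) ?prod_nat_const ?card_ord // => i _.
rewrite /bump /= add1n eqSS (ltn_eqF (ltn_ord i)) cardC1 card_ord //.
Qed.

Section Count.
Variable m : nat.
Local Notation n := m.+2.
Local Notation V := (ccc_vertex n).

Definition A (b : 'I_8) : {set V} := [set x : V | (size (vseq x) == n) && (last c0 (vseq x) == b)].

Definition hf (x : V) : {ffun 'I_n -> 'I_8} := [ffun i => tnth (val x).2 i].

Lemma A_k (x : V) b : x \in A b -> val (val x).1 = m.+1.
Proof. by rewrite inE vseq_size => /andP [/eqP [h] _]; exact: h. Qed.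

Lemma vseq_max (x : V) t : val x = (ord_max, t) -> vseq x = t.
Proof. by rewrite /vseq => ->; rewrite take_oversize // size_tuple. Qed.

Lemma card_A b : #|A b| = 8 * 7 ^ m.
Proof.
rewrite -(card_Fam m b) -(@card_in_imset _ _ hf).
  suff -> : [set hf x | x in A b] = [set f in family (@Fam m b)] by rewrite cardsE.
  apply/setP => f; rewrite inE.
  apply/imsetP/idP.
  - case=> x xA ->; have hk := A_k xA.
    move: xA; rewrite inE => /andP [_ /eqP hl].
    case: x hk hl => [[k t] vx] /= hk hl.
    apply/familyP => i; rewrite ffunE /Fam.
    case: eqP => [//|i0]; case: eqP => [iM|iM].
      rewrite inE -hl /vseq /= hk take_oversize ?size_tuple //.
      rewrite (last_nth c0) size_tuple /= (tnth_nth c0); apply/eqP; congr nth.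
      by rewrite iM.
    rewrite inE /=; have := (validP vx i).2; rewrite /= hk; apply.
    have := ltn_ord i; lia.
  - move/familyP => hf'.
    have vx : ccc_valid ((@ord_max m.+1), [tuple f i | i < n]).
      apply/forallP => i /=; apply/andP; split; apply/implyP => hi.
        by have := ltn_ord i; lia.
      rewrite tnth_mktuple; have := hf' i; rewrite /Fam.
      rewrite (_ : (nat_of_ord i == 0) = false); last lia.
      by rewrite (_ : (nat_of_ord i == m.+1) = false); last lia.
    exists (exist (fun x => ccc_valid x) _ vx : V).
      rewrite inE (@vseq_max _ [tuple f i | i < n]) // size_tuple eqxx andTb (last_nth c0) size_tuple.
      change (nth c0 [tuple f i | i < n] (@ord_max m.+1) == b).
      rewrite -tnth_nth tnth_mktuple.
      by have := hf' ord_max; rewrite /Fam /= eqxx.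
    by apply/ffunP => i; rewrite !ffunE tnth_mktuple.
move=> x y xA yA /ffunP E; apply: val_inj.
have hx := A_k xA; have hy := A_k yA.
case: x y xA yA E hx hy => [[k t] vx] [[k' t'] vy] /= _ _ E hx hy.
have ekk : k = k' by apply: val_inj; rewrite /= hx hy.
subst k'; congr pair; apply: eq_from_tnth => i; have := E i; by rewrite !ffunE.
Qed.
End Count.


Lemma sum_sets (T : finType) (R : {set T}) (P : pred T) (f : T -> 'I_8) (bs : seq 'I_8) :
  uniq bs -> \sum_(b <- bs) #|[set x in R | P x && (f x == b)]| = #|[set x in R | P x && (f x \in bs)]|.
Proof.
elim: bs => [|b bs IH] /=.
  move=> _; rewrite big_nil; apply/esym/eqP; rewrite cards_eq0; apply/eqP/setP => x.
  by rewrite !inE ?in_nil !andbF.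
case/andP => nb ubs; rewrite big_cons IH //.
have -> : [set x in R | P x && (f x \in b :: bs)] =
  [set x in R | P x && (f x == b)] :|: [set x in R | P x && (f x \in bs)].
  apply/setP => x; rewrite !inE. case: (x \in R); case: (P x) => //=.
rewrite cardsU; suff -> : [set x in R | P x && (f x == b)] :&: [set x in R | P x && (f x \in bs)] = set0.
  by rewrite cards0 subn0.
apply/setP => x; rewrite !inE; case: (x \in R); case: (P x) => //=; case: eqP => // ->.
by rewrite (negbTE nb) !andbF.
Qed.

Definition c1 : 'I_8 := @Ordinal 8 1 isT.
Definition c2 : 'I_8 := @Ordinal 8 2 isT.
Definition c3 : 'I_8 := @Ordinal 8 3 isT.
Definition c4 : 'I_8 := @Ordinal 8 4 isT.
Definition c5 : 'I_8 := @Ordinal 8 5 isT.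
Definition c7 : 'I_8 := @Ordinal 8 7 isT.

Lemma cd_pair' a b : a != c0 -> b != c0 -> cd a b = 3 -> (a \in [:: c1; c2; c3]) || (b \in [:: c1; c2; c3]).
Proof.
move=> h1 h2 /eqP h3; move: a b h1 h2 h3.
have H := all8_2 (P := fun a b => (a != c0) ==> (b != c0) ==> (cd a b == 3) ==> ((a \in [:: c1; c2; c3]) || (b \in [:: c1; c2; c3]))).
move=> a b h1 h2 h3; move: (H (ltac:(by vm_compute)) a b); by rewrite h1 h2 h3.
Qed.

Section Final.
Variable m : nat.
Local Notation n := m.+2.
Local Notation V := (ccc_vertex n).
Local Notation maxV := (maxd (@ccc_rel n) (@DV m)).
Local Notation A := (@A m).

Definition lab (x : V) := last c0 (vseq x).
Definition leaf (x : V) := size (vseq x) == n.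

Lemma A_E b : A b = [set x | leaf x && (lab x == b)].
Proof. by apply/setP => x; rewrite !inE. Qed.

Lemma pre_rcons (x : V) : vseq x = rcons (behead (belast c0 (vseq x))) (lab x).
Proof.
rewrite /lab; case/lastP E: (vseq x) => [|P b]; first by case: (vseq_ne E).
by rewrite belast_rcons last_rcons.
Qed.

Lemma inA_r (x : V) b : x \in A b -> exists2 P, vseq x = rcons P b & size P = m.+1.
Proof.
rewrite inE => /andP [/eqP hs /eqP hl]; exists (behead (belast c0 (vseq x))).
  by rewrite {1}pre_rcons /lab hl.
by move: hs; rewrite {1}pre_rcons size_rcons => -[].
Qed.

Lemma okc0 : okb m [:: c0]. Proof. by []. Qed.
Definition v0 : V := exist (fun x => ccc_valid x) _ (enc_valid okc0).
Definition Spre := nseq m.+1 c1.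
Lemma okS : okb m (rcons Spre c6).
Proof. by rewrite okb_rcons size_nseq ltnSn /=; apply/allP => y /nseqP [->]. Qed.
Definition apexS : V := mkV v0 (rcons Spre c6).
Lemma vseq_apexS : vseq apexS = rcons Spre c6.
Proof. exact: mkVE okS. Qed.
Lemma apexS_A : apexS \in A c6.
Proof. by rewrite inE vseq_apexS size_rcons size_nseq last_rcons !eqxx. Qed.

Definition Rup : {set V} := A c1 :|: A c2 :|: A c3 :|: (A c6 :\ apexS).

Lemma cover (x y : V) : x != y -> maxV x y -> maxV y x -> (x \in Rup) || (y \in Rup).
Proof.
move=> nxy mxy myx.
have Ey := pre_rcons y; have Ex := pre_rcons x.
set P := behead _ in Ey; set Q := behead _ in Ex.
case: (max_nec mxy Ey) => hP nb HA HB.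
case: (max_nec myx Ex) => hQ na HA' HB'.
have inR : forall z : V, leaf z -> lab z \in [:: c1; c2; c3] -> z \in Rup.
  move=> z; rewrite /leaf /lab => hz hl; rewrite !inE hz /=.
  rewrite !in_cons in_nil orbF in hl; case/or3P: hl => /eqP ->; by rewrite ?eqxx ?orbT.
case: (eqVneq P Q) => [ePQ|nPQ].
  have hab : cd (lab x) (lab y) = 3 by apply: (HA _ [::]); rewrite Ex cats1 ePQ.
  case/orP: (cd_pair' na nb hab) => h.
    by rewrite inR //; rewrite /leaf Ex size_rcons hQ.
  by rewrite orbC inR //; rewrite /leaf Ey size_rcons hP.
have h6 : forall (z : V) R b, vseq z = rcons R b -> size R = m.+1 -> R != P -> forall c l, vseq z != P ++ c :: l.
  move=> z R b Ez hR nRP c l; apply/negP => /eqP E; rewrite Ez in E.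
  case: (cat1_eq (etrans hP (esym hR)) E) => eRP _; by rewrite eRP eqxx in nRP.
have hb : lab y = c6 by apply: cd0_3; apply: HB; apply: (h6 x Q (lab x)) => //; rewrite eq_sym.
have h6' : forall (z : V) R b, vseq z = rcons R b -> size R = m.+1 -> R != Q -> forall c l, vseq z != Q ++ c :: l.
  move=> z R b Ez hR nRQ c l; apply/negP => /eqP E; rewrite Ez in E.
  case: (cat1_eq (etrans hQ (esym hR)) E) => eRQ _; by rewrite eRQ eqxx in nRQ.
have ha : lab x = c6 by apply: cd0_3; apply: HB'; apply: (h6' y P (lab y)).
have in6 : forall z : V, leaf z -> lab z = c6 -> z != apexS -> z \in Rup.
  move=> z; rewrite /leaf /lab => hz hl na'; by rewrite !inE hz hl na' /= eqxx.
case: (eqVneq x apexS) => [exS|nxS].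
  rewrite orbC in6 //; first by rewrite /leaf Ey size_rcons hP.
  by rewrite -exS eq_sym.
by rewrite in6 //; rewrite /leaf Ex size_rcons hQ.
Qed.

Lemma AsE (R : {set V}) b : R :&: A b = [set x in R | leaf x && (lab x == b)].
Proof. by apply/setP => x; rewrite !inE. Qed.

Lemma card_Rup : #|Rup| = 4 * (8 * 7 ^ m) - 1.
Proof.
have -> : Rup = [set x in [set: V] :\ apexS | leaf x && (lab x \in [:: c1; c2; c3; c6])].
  apply/setP => x; rewrite !inE /leaf /lab.
  case: (eqVneq x apexS) => [->|nx] /=; first by rewrite vseq_apexS last_rcons; case: (size _ == _).
  by case: (size _ == _); case: (last c0 (vseq x) == c1); case: (last c0 (vseq x) == c2);
     case: (last c0 (vseq x) == c3); case: (last c0 (vseq x) == c6).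
rewrite -(sum_sets _ leaf lab (bs := [:: c1; c2; c3; c6])) // !big_cons big_nil.
have E1 : forall b, b != c6 -> #|[set x in [set: V] :\ apexS | leaf x && (lab x == b)]| = 8 * 7 ^ m.
  move=> b nb; rewrite -(card_A m b); apply: eq_card => x; rewrite !inE.
  case: (eqVneq x apexS) => [->|] //=; rewrite /leaf /lab vseq_apexS last_rcons.
  by rewrite (eq_sym c6) (negbTE nb) andbF.
have E6 : #|[set x in [set: V] :\ apexS | leaf x && (lab x == c6)]| = 8 * 7 ^ m - 1.
  have HA6 := cardsD1 apexS (A c6); rewrite apexS_A card_A add1n in HA6.
  rewrite HA6 subn1 /=; apply: eq_card => x; rewrite !inE /leaf /lab; by case: (x == apexS).
rewrite E6 !E1 // addn0.
have := card_A m c6; have : 0 < 8 * 7 ^ m by rewrite muln_gt0 expn_gt0.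
lia.
Qed.

Lemma pair_bound (R : {set V}) a a' : strong_resolving_set (@ccc_rel n) R ->
  a != c0 -> a' != c0 -> cd a a' = 3 ->
  8 * 7 ^ m <= #|R :&: A a| + #|R :&: A a'|.
Proof.
move=> HR na na' haa.
pose sg (x : V) := mkV x (rcons (behead (belast c0 (vseq x))) a').
have Hsg : forall x, x \in A a -> vseq x = rcons (behead (belast c0 (vseq x))) a /\
    vseq (sg x) = rcons (behead (belast c0 (vseq x))) a' /\ size (behead (belast c0 (vseq x))) = m.+1.
  move=> x xA; have hl : lab x = a by move: xA; rewrite inE => /andP [_ /eqP].
  have Ex := pre_rcons x; rewrite hl in Ex.
  rewrite /sg; set P := behead _ in Ex *.
  have hs : size P = m.+1 by move: xA; rewrite inE Ex size_rcons => /andP [/eqP [->] _].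
  split => //; split => //; rewrite mkVE //; apply: (@ok_lab m _ a); rewrite -Ex; exact: vs_ok.
rewrite -(card_A m a) -(cardsID R (A a)) setIC leq_add2l.
rewrite -(@card_in_imset _ _ sg (A a :\: R)).
  apply: subset_leq_card; apply/subsetP => y /imsetP [x]; rewrite inE => /andP [xR xA] ->.
  case: (Hsg x xA) => Ex [Esx hs].
  have sA : sg x \in A a' by rewrite inE Esx size_rcons hs last_rcons !eqxx.
  rewrite inE sA andbT.
  have nx : x != sg x.
    apply/negP => /eqP E; have := congr1 (fun v => last c0 (vseq v)) E.
    rewrite /= Esx {1}Ex !last_rcons => eaa; rewrite eaa cd_refl in haa; by [].
  case: (HR _ _ nx) => w wR hw.
  case: (MM1 Ex Esx hs na na' haa) => m1 m2.
  case: (only_res (@DV0 m) (@DLip m) (@Ddesc m) m1 m2 hw) => ew; subst w => //.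
  by rewrite wR in xR.
move=> x y /setDP [xA _] /setDP [yA _] E.
case: (Hsg x xA) => Ex [Esx _]; case: (Hsg y yA) => Ey [Esy _].
apply: vs_inj; rewrite Ex Ey; move: Esx Esy; rewrite E => -> /rcons_eq2 [-> _] //.
Qed.

Lemma apex_bound (R : {set V}) : strong_resolving_set (@ccc_rel n) R ->
  8 * 7 ^ m <= #|R :&: A c6| + 1.
Proof.
move=> HR; rewrite -(card_A m c6) -(cardsID R (A c6)) setIC leq_add2l.
apply/card_le1_eqP => x y /setDP [xA xR] /setDP [yA yR].
case: (eqVneq y x) => // nyx; exfalso.
case: (inA_r xA) => P Ex hP; case: (inA_r yA) => Q Ey hQ.
have nQP : Q != P by apply: contra nyx => /eqP ePQ; apply/eqP/vs_inj; rewrite Ex Ey ePQ.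
case: (HR _ _ nyx) => w wR hw.
case: (MM2 Ey Ex hQ hP nQP) => m1 m2.
case: (only_res (@DV0 m) (@DLip m) (@Ddesc m) m1 m2 hw) => ew; subst w.
  by rewrite wR in yR.
by rewrite wR in xR.
Qed.

Lemma lower (R : {set V}) : strong_resolving_set (@ccc_rel n) R -> 4 * (8 * 7 ^ m) - 1 <= #|R|.
Proof.
move=> HR.
have H := sum_sets R leaf lab (bs := [:: c1; c7; c2; c4; c3; c5; c6]) isT.
have Hle : #|[set x in R | leaf x && (lab x \in [:: c1; c7; c2; c4; c3; c5; c6])]| <= #|R|.
  by apply: subset_leq_card; apply/subsetP => x; rewrite inE => /andP [].
rewrite -H !big_cons big_nil -!AsE in Hle.
have h1 := pair_bound (a := c1) (a' := c7) HR isT isT (erefl _).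
have h2 := pair_bound (a := c2) (a' := c4) HR isT isT (erefl _).
have h3 := pair_bound (a := c3) (a' := c5) HR isT isT (erefl _).
have h4 := apex_bound HR.
lia.
Qed.
End Final.

Theorem theorem2 (n : nat) (hn : 2 <= n) :
  is_sdim (@ccc_rel n) (32 * 7 ^ (n - 2) - 1).
Proof.
case: n hn => [|[|m]] // _.
have -> : m.+2 - 2 = m by lia.
have -> : 32 * 7 ^ m = 4 * (8 * 7 ^ m) by rewrite mulnA.
split.
  exists (Rup m); split; last exact: card_Rup.
  apply: (cover_res (@DV0 m) (@DLip m) (@Ddesc m)) => a b nab mab mba.
  exact: cover nab mab mba.
move=> R HR; exact: lower HR.
Qed.
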